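(* Let $k$ be a binary kernel on a non-empty set $\mathcal X$. Then for all $x,y\in\mathcal X$: if $x\sim_k y$ then $x\sim_k x$.
   Context: A kernel on $\mathcal X$ is a symmetric positive semidefinite function $k:\mathcal X\times\mathcal X\to\mathbb R$. A kernel $k$ is binary if $k(x,y)\in\{0,1\}$ for all $x,y\in\mathcal X$. The relation induced by a binary kernel $k$ is $\sim_k=\{(x,y)\in\mathcal X\times\mathcal X : k(x,y)=1\}$. *)

(* Defs.v *)
From Stdlib Require Import Reals List.
Open Scope R_scope.

(* Double sum  sum_i sum_j c_i c_j k(x_i, x_j) over a finite family given as
   a list of (coefficient, point) pairs. *)
Definition gram_form {X : Type} (k : X -> X -> R) (l : list (R * X)) : R :=
  fold_right Rplus 0
    (map (fun p => fold_right Rplus 0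
            (map (fun q => fst p * fst q * k (snd p) (snd q)) l)) l).

Definition is_kernel {X : Type} (k : X -> X -> R) : Prop :=
  (forall x y, k x y = k y x) /\
  (forall l : list (R * X), 0 <= gram_form k l).

Definition is_binary_kernel {X : Type} (k : X -> X -> R) : Prop :=
  is_kernel k /\ (forall x y, k x y = 0 \/ k x y = 1).

Definition krel {X : Type} (k : X -> X -> R) (x y : X) : Prop := k x y = 1.

(* Main.v *)
Require Import Defs.
From Stdlib Require Import Reals List Lra.
Open Scope R_scope.

Theorem lemma1 (X : Type) (x0 : X) (k : X -> X -> R)
  (hk : is_binary_kernel k) :
  forall x y : X, krel k x y -> krel k x x.
Proof.
  intros x y H. unfold krel in *.
  destruct hk as [[Hs Hp] Hb].
  destruct (Hb x x) as [H0|H1]; [|exact H1].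
  exfalso.
  specialize (Hp ((-1, x) :: (1, y) :: nil)).
  unfold gram_form in Hp; simpl in Hp.
  rewrite (Hs y x), H, H0 in Hp.
  destruct (Hb y y) as [E|E]; rewrite E in Hp; lra.
Qed.
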